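(* Let $\phi_0 := 1 - \dfrac{(a\beta_0 - \sqrt{r})^2}{a\mu + r}$ and $\phi_1 := \dfrac{a^2\beta_0^2 + a\mu}{a\mu + r}$. Then: (1) $a\beta_0 - 2\sqrt{r} < \dfrac{\mu}{\beta_0}$ if and only if $\phi_0 > 0$; (2) $\mathcal{R}_0 > \phi_1$; (3) if $a\beta_0 < \sqrt{r}$, then $\phi_1 < 1$; (4) $a\beta_0 < \sqrt{r}$ if and only if $\phi_1 < \phi_0$.
   Context: Consider the autonomous planar system $\dot S = S(A-S) - \beta_0 I S$, $\dot I = \beta_0 I S - \mu I - \dfrac{rI}{a+I}$ on $(\mathbb{R}_0^+)^2$, with all parameters $A, r, \beta_0, a, \mu$ positive (here $\mu$ denotes the sum of the natural death rate and the disease death rate). The basic reproduction number is $\mathcal{R}_0 = \dfrac{\beta_0 A}{\mu + r/a}$. It is assumed that $S(t)\le A$ for all $t\ge 0$. Let $\Delta = \left(a\beta_0 + A - \frac{\mu}{\beta_0}\right)^2 - 4r > 0$, so that the system has two endemic equilibria $E_3=(S_3,I_3)$, $E_4=(S_4,I_4)$ with $S_{3,4} = \dfrac{a\beta_0 + A + \frac{\mu}{\beta_0} \mp \sqrt{\Delta}}{2}$, $I_j = (A-S_j)/\beta_0$, and these satisfy $S_3 < S_4 < A$ (this is used for item (2)). *)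

(* Defs.v *)
From Stdlib Require Import Reals Lra.
Open Scope R_scope.

Definition Rnought (A r beta0 a mu : R) : R := beta0 * A / (mu + r / a).

Definition phi0 (r beta0 a mu : R) : R :=
  1 - (a * beta0 - sqrt r) ^ 2 / (a * mu + r).

Definition phi1 (r beta0 a mu : R) : R :=
  (a ^ 2 * beta0 ^ 2 + a * mu) / (a * mu + r).

Definition DeltaE (A r beta0 a mu : R) : R :=
  (a * beta0 + A - mu / beta0) ^ 2 - 4 * r.

Definition S3 (A r beta0 a mu : R) : R :=
  (a * beta0 + A + mu / beta0 - sqrt (DeltaE A r beta0 a mu)) / 2.
Definition S4 (A r beta0 a mu : R) : R :=
  (a * beta0 + A + mu / beta0 + sqrt (DeltaE A r beta0 a mu)) / 2.

(* Main.v *)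
Require Import Defs.
From Stdlib Require Import Reals.
From Stdlib Require Import Lra Psatz.
Open Scope R_scope.

Theorem lemma5p2 (A r beta0 a mu : R)
  (hA : 0 < A) (hr : 0 < r) (hb : 0 < beta0) (ha : 0 < a) (hmu : 0 < mu)
  (hDelta : 0 < DeltaE A r beta0 a mu)
  (hS34 : S3 A r beta0 a mu < S4 A r beta0 a mu)
  (hS4A : S4 A r beta0 a mu < A) :
  (a * beta0 - 2 * sqrt r < mu / beta0 <-> 0 < phi0 r beta0 a mu)
  /\ phi1 r beta0 a mu < Rnought A r beta0 a mu
  /\ (a * beta0 < sqrt r -> phi1 r beta0 a mu < 1)
  /\ (a * beta0 < sqrt r <-> phi1 r beta0 a mu < phi0 r beta0 a mu).
Proof.
  unfold phi0, phi1, Rnought.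
  unfold S4 in hS4A.
  assert (hsq := sqrt_pos (DeltaE A r beta0 a mu)).
  set (D := sqrt (DeltaE A r beta0 a mu)) in *.
  set (m := mu / beta0) in *.
  assert (hm : mu = m * beta0) by (unfold m; field; lra).
  clearbody m D.
  assert (hs : sqrt r * sqrt r = r) by (apply sqrt_sqrt; lra).
  assert (hs0 : 0 < sqrt r) by (apply sqrt_lt_R0; lra).
  set (s := sqrt r) in *. clearbody s. subst r mu.
  assert (hP : 0 < a * (m * beta0) + s * s) by nra.
  assert (hab : 0 < a * beta0) by nra.
  assert (E0 : forall x, x / (a * (m * beta0) + s * s) < 1 <-> x < a * (m * beta0) + s * s).
  { intro x. split; intro H.
    - apply Rmult_lt_compat_r with (r := a * (m * beta0) + s * s) in H; [|lra].
      field_simplify in H; lra.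
    - apply Rmult_lt_reg_r with (r := a * (m * beta0) + s * s); [lra|].
      field_simplify; lra. }
  assert (E1 : forall x y, x / (a * (m * beta0) + s * s) < y / (a * (m * beta0) + s * s) <-> x < y).
  { intros x y. split; intro H.
    - apply Rmult_lt_compat_r with (r := a * (m * beta0) + s * s) in H; [|lra].
      field_simplify in H; lra.
    - apply Rmult_lt_compat_r; [apply Rinv_0_lt_compat; lra| lra]. }
  split; [|split; [|split]].
  - assert (H1 : 0 < 1 - (a * beta0 - s) ^ 2 / (a * (m * beta0) + s * s) <->
                 (a * beta0 - s) ^ 2 < a * (m * beta0) + s * s).
    { rewrite <- E0. lra. }
    rewrite H1. split; intro H; nra.
  - replace (beta0 * A / (m * beta0 + s * s / a)) with ((a * beta0 * A) / (a * (m * beta0) + s * s))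
      by (field; split; nra).
    apply E1. nra.
  - intro H. apply E0. nra.
  - replace (1 - (a * beta0 - s) ^ 2 / (a * (m * beta0) + s * s)) with
      ((a * (m * beta0) + s * s - (a * beta0 - s) ^ 2) / (a * (m * beta0) + s * s))
      by (field; lra).
    rewrite E1. split; intro H; nra.
Qed.
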